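(* Let $G$ be a finite group and $\chi\in\mathrm{Irr}(G)$. Then $\chi$ is linear (i.e. $\chi(1)=1$) if and only if $[Z(\chi),G]=G'$.
   Context: $\mathrm{Irr}(G)$ is the set of complex irreducible characters of $G$. For a character $\chi$, $Z(\chi)=\{g\in G: |\chi(g)|=\chi(1)\}$. *)

(* Defs.v *)
From mathcomp Require Import all_boot all_order all_algebra all_fingroup all_solvable all_field all_character.

(* Main.v *)
Require Import Defs.
From mathcomp Require Import all_boot all_order all_algebra all_fingroup all_solvable all_field all_character.
Import GRing.Theory Num.Theory.
Local Open Scope ring_scope.

Theorem mainTheorem9 (gT : finGroupType) (G : {group gT}) (i : Iirr G) :
  ('chi[G]_i 1%g == 1) = ([~: ('Z('chi[G]_i))%CF, G] == G^`(1))%g.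
Proof.
have -> : ('chi[G]_i 1%g == 1) = ('chi_i \is a linear_char).
  by rewrite qualifE /= irr_char.
have sZG := cfcenter_sub 'chi[G]_i.
have nKG : G \subset 'N(cfker 'chi[G]_i)%g := normal_norm (cfker_normal _).
apply/idP/idP => [Lchi | /eqP defG'].
  have sGZ : G \subset ('Z('chi[G]_i))%CF.
    apply/subsetP => x Gx; rewrite irr_cfcenterE //.
    by rewrite normC_lin_char // lin_char1.
  rewrite eqEsubset (commSg _ sZG) /=.
  by rewrite (commSg _ sGZ).
rewrite lin_irr_der1 -defG'.
have := cfcenter_subset_center 'chi[G]_i.
rewrite subsetI => /andP[_ H].
by rewrite -quotient_cents2 // (subset_trans sZG nKG).
Qed.
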